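(* Let $\varphi$ be an endomorphism of $F_n$ and $K=\max\{|a\varphi|: a\in A\cup A^{-1}\}$. If $\varphi$ is almost length-increasing, then $|u\varphi|\geq|u|-K$ for every $u\in F_n$.
   Context: $F_n$ is the free group on a finite basis $A$; elements are reduced words over $A\cup A^{-1}$ and $|u|$ is the length; maps are written on the right. An endomorphism $\varphi$ is almost length-increasing if $|u\varphi|<|u|$ for only finitely many $u\in F_n$. *)

(* Defs.v *)
From mathcomp Require Import all_boot.
Set Implicit Arguments. Unset Strict Implicit. Unset Printing Implicit Defensive.

(* A letter is (a, true) = a
   or (a, false) = a^-1.  Elements of F_n are reduced words (seq of letters
   with no factor x x^-1); the length |u| is the size of the word. *)
Section FreeGroup.
Variable A : finType.

Definition letter := (A * bool)%type.
Definition word := seq letter.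

Definition linv (x : letter) : letter := (x.1, ~~ x.2).

Definition winv (u : word) : word := rev (map linv u).

Fixpoint reduced (u : word) : bool :=
  match u with
  | x :: ((y :: _) as t) => (y != linv x) && reduced t
  | _ => true
  end.

Definition reduce (u : word) : word :=
  foldr (fun x acc => match acc with
                      | y :: t => if y == linv x then t else x :: acc
                      | [::] => [:: x]
                      end) [::] u.

(* The endomorphism of F_n determined by the images g a (reduced words) of the
   basis elements a: u phi = reduce of the concatenation of the images of the
   letters of u (maps written on the right). *)
Definition limg (g : A -> word) (x : letter) : word :=
  if x.2 then g x.1 else winv (g x.1).

Definition endo (g : A -> word) (u : word) : word :=
  reduce (flatten (map (limg g) u)).

Definition Kmax (g : A -> word) : nat :=
  \max_(x : letter) size (endo g [:: x]).

Definition almost_length_increasing (g : A -> word) : Prop :=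
  exists s : seq word, forall u : word,
    reduced u -> size (endo g u) < size u -> u \in s.

End FreeGroup.

(* Main.v *)
Require Import Defs.
From mathcomp Require Import all_boot.
Set Implicit Arguments. Unset Strict Implicit. Unset Printing Implicit Defensive.

Section S.
Variable A : finType.
Implicit Types (x y : letter A) (w p q r c : word A).

Definition cr x (acc : word A) : word A :=
  match acc with
  | y :: t => if y == linv x then t else x :: acc
  | [::] => [:: x]
  end.

Lemma reduceE w : reduce w = foldr cr [::] w. Proof. by []. Qed.

Lemma linvK x : linv (linv x) = x.
Proof. by case: x => a b; rewrite /linv /= negbK. Qed.

Lemma linv_inj : injective (@linv A).
Proof. by move=> x y H; rewrite -(linvK x) H linvK. Qed.

Lemma linv_neq x : linv x != x.
Proof. by case: x => a b; rewrite /linv /= xpair_eqE eqxx /=; case: b. Qed.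

Lemma reduced_tail y t : reduced (y :: t) -> reduced t.
Proof. by case: t => //= z t /andP[]. Qed.

Lemma cr_red x w : reduced w -> reduced (cr x w).
Proof.
case: w => //= y t H; case: ifP => E; first exact: reduced_tail H.
by rewrite /= E.
Qed.

Lemma cr_cancel x w : reduced w -> cr x (cr (linv x) w) = w.
Proof.
case: w => [|y t] /=; first by rewrite eqxx.
rewrite linvK; case: (eqVneq y x) => [->|ne] H.
  case: t H => //= z t /andP[nz _]; by rewrite (negbTE nz).
by rewrite /= eqxx.
Qed.

Lemma foldr_cr_comm c x r : reduced c -> foldr cr c (cr x r) = cr x (foldr cr c r).
Proof.
move=> Hc; case: r => // y t /=; case: (eqVneq y (linv x)) => [->|] //.
have Hr : reduced (foldr cr c t) by elim: t => //= z t IH; exact: cr_red.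
by rewrite cr_cancel.
Qed.

Lemma foldr_reduce c a : reduced c -> foldr cr c a = foldr cr c (reduce a).
Proof.
move=> Hc; elim: a => //= x a IH.
by rewrite IH -foldr_cr_comm.
Qed.

Lemma reduce_red w : reduced (reduce w).
Proof. rewrite reduceE; elim: w => //= x w IH; exact: cr_red. Qed.

Lemma size_cr x w : size (cr x w) <= (size w).+1.
Proof. case: w => //= y t; case: ifP => //= _; exact: leqW. Qed.

Lemma size_foldr c r : size (foldr cr c r) <= size r + size c.
Proof.
elim: r => //= x r IH; apply: leq_trans (size_cr _ _) _; by rewrite addSn ltnS.
Qed.

Lemma size_reduce_cat p q : size (reduce (p ++ q)) <= size (reduce p) + size (reduce q).
Proof.
rewrite reduceE foldr_cat -reduceE (foldr_reduce _ (reduce_red q)).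
exact: size_foldr.
Qed.

Variable g : A -> word A.

Lemma size_endo_cat u v : size (endo g (u ++ v)) <= size (endo g u) + size (endo g v).
Proof. by rewrite /endo map_cat flatten_cat; apply: size_reduce_cat. Qed.

Lemma size_endo_letter x : size (endo g [:: x]) <= Kmax g.
Proof. rewrite /Kmax; exact: (@leq_bigmax _ (fun y => size (endo g [:: y])) x). Qed.

Lemma reduced_cat x p y q :
  reduced (x :: p) -> reduced (y :: q) -> y != linv (last x p) ->
  reduced (x :: p ++ y :: q).
Proof.
elim: p x => [|z p IH] x; first by move=> /= _ -> ->.
move=> /andP[H1 Hp] Hq Hne.
change ((z != linv x) && reduced (z :: p ++ y :: q)); by rewrite H1 IH.
Qed.

Definition pw w k := flatten (nseq k w).

Lemma pw_red x p k : reduced (x :: p) -> x != linv (last x p) ->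
  reduced (pw (x :: p) k).
Proof.
move=> Hw Hc.
suff H : forall k, reduced ((x :: p) ++ pw (x :: p) k).
  by case: k => // k; apply: H.
clear k; elim=> [|k IH]; first by rewrite cats0.
rewrite /pw /= -/(pw (x :: p) k).
exact: (reduced_cat Hw IH Hc).
Qed.

Lemma size_pw w k : size (pw w k) = k * size w.
Proof. elim: k => //= k IH; by rewrite size_cat -/(pw w k) IH mulSn. Qed.

Lemma size_endo_pw w k : size (endo g (pw w k)) <= k * size (endo g w).
Proof.
elim: k => // k IH; rewrite /pw /= -/(pw w k) mulSn.
apply: leq_trans (size_endo_cat _ _) _; by rewrite leq_add2l.
Qed.

Lemma in_sumn (v : word A) s : v \in s -> size v <= sumn (map size s).
Proof.
elim: s => //= z s IH; rewrite in_cons => /orP[/eqP->|/IH H]; first exact: leq_addr.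
exact: leq_trans H (leq_addl _ _).
Qed.

Lemma const_last x t : (forall y, y = x \/ y = linv x) -> reduced (x :: t) ->
  last x t = x.
Proof.
move=> Hall; elim: t x Hall => //= z t IH x Hall /andP[nz Hr].
have ezx : z = x by case: (Hall z) => // E; rewrite E eqxx in nz.
subst z; exact: IH.
Qed.

End S.

Theorem mainTheorem12 (A : finType) (g : A -> word A) :
  (forall a : A, reduced (g a)) ->
  almost_length_increasing g ->
  forall u : word A, reduced u -> size u <= size (endo g u) + Kmax g.
Proof.
move=> _ [s Hs] u Hu; rewrite leqNgt; apply/negP => Hbad.
suff [x [p [Hw [Hc Hlt]]]] : exists x p, reduced (x :: p) /\
   x != linv (last x p) /\ size (endo g (x :: p)) < size (x :: p).
  set k := (sumn (map size s)).+1.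
  have Hv := pw_red k Hw Hc.
  have Hlt2 : size (endo g (pw (x :: p) k)) < size (pw (x :: p) k).
    apply: leq_ltn_trans (size_endo_pw g _ k) _.
    by rewrite size_pw ltn_pmul2l.
  have := in_sumn (Hs _ Hv Hlt2); rewrite size_pw leqNgt => /negP; apply.
  by apply: leq_trans (leq_pmulr _ _).  
case: u Hu Hbad => [|f t] Hu Hbad; first by [].
case: (eqVneq f (linv (last f t))) => Hfl; last first.
  exists f, t; split=> //; split=> //; exact: leq_ltn_trans (leq_addr _ _) Hbad.
set l := last f t in Hfl.
case: (pickP (fun y : letter A => (y != l) && (y != linv l))) => [y /andP[yl yil]|Hn].
  exists f, (t ++ [:: y]); split.
    by apply: reduced_cat => //; rewrite /= andbT.
  split.
    rewrite cats1 last_rcons Hfl; apply/negP => /eqP /linv_inj E.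
    by rewrite E eqxx in yl.
  rewrite -cat_cons; apply: leq_ltn_trans (size_endo_cat g _ _) _.
  rewrite size_cat addn1 ltnS; apply: leq_trans (ltnW Hbad).
  by rewrite leq_add2l size_endo_letter.
exfalso.
have Hall : forall y, y = f \/ y = linv f.
  move=> y; have := Hn y; rewrite Hfl linvK.
  case: (eqVneq y l) => [->|]; first by right.
  by case: (eqVneq y (linv l)) => [->|]; [left|].
have := const_last Hall Hu; rewrite -/l => El.
by move: Hfl; rewrite El => /eqP; rewrite eq_sym (negbTE (linv_neq f)).
Qed.
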